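(* Fix $0<p<1$, $q=1-p$, and integers $L<U$ with $U-L\ge 4$. With the notation of the context, for every integer $k\ge 2$ the functions $m_k(x)=\mathbb{E}\tau^x_k$ ($x$ an integer in $[L,U]$) satisfy $$m_k(x)=\begin{cases}0,&x=U,\\ 1+q\,m_{k-1}(x-1),&x=U-1,\\ 1+p+pq\,m_{k-2}(x)+q\,m_{k-1}(x-1),&x=U-2,\\ 1+pq\,m_{k-2}(x)+p\,m_{k-1}(x+2)-pq\,m_{k-2}(x+1)+q\,m_{k-1}(x-1),&L+1\le x\le U-3,\\ 0,&x=L,\end{cases}$$ and the family $(m_k)$ is the unique solution of this system of linear difference equations.
   Context: Let $\xi_1,\xi_2,\dots$ be i.i.d. random variables with values in $\{1,-1\}$, $\mathbb{P}(\xi_i=1)=p$, $\mathbb{P}(\xi_i=-1)=q:=1-p$. Define $X_k=-1$ if $\xi_k=-1$; $X_k=2$ if $\xi_k=\xi_{k-1}=1$ (for $k\ge 2$); and $X_k=1$ otherwise (in particular $X_1=1$ when $\xi_1=1$). Let $S_0=0$, $S_k=X_1+\dots+X_k$, and $S^x_k=x+S_k$. For $k\ge 0$ let $\tau^x_k=\min\{l\in\{0,\dots,k\}: S^x_l\le L \text{ or } S^x_l\ge U\}$ if this set is nonempty, and $\tau^x_k=k$ otherwise. *)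

(* Defs.v *)
From mathcomp Require Import all_boot all_order all_algebra.
Set Implicit Arguments. Unset Strict Implicit. Unset Printing Implicit Defensive.
Import Order.TTheory GRing.Theory Num.Theory.
Local Open Scope ring_scope.

(* A realization of (xi_1,...,xi_k) is a sequence w of booleans:
   xi_{i+1} = 1  iff  nth false w i = true  (0-indexed). *)

Definition Xstep (w : seq bool) (i : nat) : int :=
  if nth false w i then
    (if (0 < i)%N && nth false w i.-1 then 2 else 1)
  else -1.

Definition Ssum (w : seq bool) (l : nat) : int := \sum_(i < l) Xstep w i.

(* tau^x_k : first l in {0..k} with x + S_l <= L or x + S_l >= U, else k. *)
Definition hits (L U x : int) (w : seq bool) (l : nat) : bool :=
  (x + Ssum w l <= L) || (U <= x + Ssum w l).

Definition tau (L U x : int) (k : nat) (w : seq bool) : nat :=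
  if has (hits L U x w) (iota 0 k.+1)
  then nth k (iota 0 k.+1) (find (hits L U x w) (iota 0 k.+1))
  else k.

Definition weight (R : nzRingType) (p : R) (w : seq bool) : R :=
  \prod_(b <- w) (if b then p else 1 - p).

(* m_k(x) = E tau^x_k ; tau^x_k depends only on xi_1..xi_k. *)
Definition mfun (R : nzRingType) (p : R) (L U : int) (k : nat) (x : int) : R :=
  \sum_(t : k.-tuple bool) weight p t * (tau L U x k t)%:R.

Definition sys_rhs (R : nzRingType) (p : R) (L U : int)
    (f : nat -> int -> R) (k : nat) (x : int) : R :=
  let q := 1 - p in
  if x == U then 0
  else if x == U - 1 then 1 + q * f k.-1 (x - 1)
  else if x == U - 2 then 1 + p + p * q * f k.-2 x + q * f k.-1 (x - 1)
  else if x == L then 0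
  else 1 + p * q * f k.-2 x + p * f k.-1 (x + 2) - p * q * f k.-2 (x + 1)
         + q * f k.-1 (x - 1).

(* Main.v *)
Require Import Defs.
From mathcomp Require Import all_boot all_order all_algebra.
From mathcomp Require Import zify ring.
Import Order.TTheory GRing.Theory Num.Theory.
Local Open Scope ring_scope.

Definition fh (a : pred nat) (k : nat) : nat :=
  if has a (iota 0 k.+1) then nth k (iota 0 k.+1) (find a (iota 0 k.+1)) else k.

Lemma fh0 a : fh a 0 = 0%N.
Proof. by rewrite /fh /=; case: (a 0%N). Qed.

Lemma iotaS0 k : iota 0 k.+1 = 0%N :: map S (iota 0 k).
Proof. by rewrite /= -[1%N]/(1 + 0)%N iotaDl; apply: congr1; apply: eq_map => x; rewrite add1n. Qed.

Lemma fhS a k : fh a k.+1 = if a 0%N then 0%N else (fh (fun n => a n.+1) k).+1.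
Proof.
rewrite /fh iotaS0; have : has (fun n => a n.+1) (iota 0 k.+1) -> (find (fun n => a n.+1) (iota 0 k.+1) < size (iota 0 k.+1))%N by rewrite has_find.
move: (iota 0 k.+1) => s Hs.
rewrite /= has_map find_map.
case: (a 0%N) => //=.
case: ifP => H //=.
by rewrite (nth_map 0%N) ?(set_nth_default k) //; apply: Hs.
Qed.
Lemma tuple_split (R : nzRingType) (F : seq bool -> R) k :
  \sum_(t : k.+1.-tuple bool) F t = \sum_(b : bool) \sum_(t : k.-tuple bool) F (b :: t).
Proof.
rewrite pair_bigA /=.
rewrite (reindex (fun u : bool * k.-tuple bool => [tuple of u.1 :: u.2])) /=.
  by [].
exists (fun t : k.+1.-tuple bool => (thead t, [tuple of behead t])).
  by move=> [b t] _ /=; congr pair; apply: val_inj.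
move=> t _; apply: val_inj => /=.
by case: t => [[|b s] Hs].
Qed.

Lemma fh_ext a b k : a =1 b -> fh a k = fh b k.
Proof. by move=> E; rewrite /fh (eq_has E) (eq_find E). Qed.

Definition stp (c b : bool) : int := if b then (if c then 2 else 1) else -1.
Definition XC (c : bool) (w : seq bool) (i : nat) : int :=
  if nth false w i then (if (if i is j.+1 then nth false w j else c) then 2 else 1) else -1.
Definition SC c w l : int := \sum_(i < l) XC c w i.

Lemma SC0 c w : SC c w 0 = 0.
Proof. by rewrite /SC big_ord0. Qed.

Lemma SC_S c w l : SC c w l.+1 = stp c (head false w) + SC (head false w) (behead w) l.
Proof.
rewrite /SC big_ord_recl; congr (_ + _).
by apply: eq_bigr => i _; rewrite /XC /=; case: w => [|b w] //=; case: (nat_of_ord i).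
Qed.

Fixpoint T (L U : int) (c : bool) (x : int) (k : nat) (w : seq bool) : nat :=
  if (x <= L) || (U <= x) then 0%N else
  match k with 0 => 0%N | k'.+1 =>
    (T L U (head false w) (x + stp c (head false w)) k' (behead w)).+1 end.

Lemma fh_T L U c x k w :
  fh (fun l => (x + SC c w l <= L) || (U <= x + SC c w l)) k = T L U c x k w.
Proof.
elim: k c x w => [|k IH] c x w.
  by rewrite fh0 /=; case: (_ || _).
rewrite fhS SC0 addr0 /=; case: ifP => // _.
congr S; rewrite -IH; apply: fh_ext => l.
by rewrite SC_S addrA.
Qed.

Lemma tau_T L U x k w : tau L U x k w = T L U false x k w.
Proof.
rewrite -fh_T /tau -/(fh _ k); apply: fh_ext => l.
rewrite /hits /Ssum /SC (eq_bigr (fun i : 'I_l => XC false w i)) //.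
by move=> [[|i] Hi] _.
Qed.

Section M.
Variables (R : nzRingType) (p : R) (L U : int).

Definition M c k x := \sum_(t : k.-tuple bool) weight p t * (T L U c x k t)%:R.

Lemma mfunE k x : mfun p L U k x = M false k x.
Proof. by apply: eq_bigr => t _; rewrite tau_T. Qed.

Lemma weight_cons b w : weight p (b :: w) = (if b then p else 1 - p) * weight p w.
Proof. by rewrite /weight big_cons. Qed.

Lemma sum_cons b k (G : seq bool -> R) :
  \sum_(t : k.-tuple bool) weight p (b :: t) * G t =
  (if b then p else 1 - p) * \sum_(t : k.-tuple bool) weight p t * G t.
Proof. by rewrite mulr_sumr; apply: eq_bigr => t _; rewrite weight_cons mulrA. Qed.

Lemma sum_weight k : \sum_(t : k.-tuple bool) weight p t = 1.
Proof.
elim: k => [|k IH].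
  rewrite (eq_bigr (fun _ => 1)) ?sumr_const ?card_tuple ?card_bool //.
  by move=> t _; rewrite (tuple0 t) /weight big_nil.
rewrite tuple_split big_bool /=.
have E b : \sum_(t : k.-tuple bool) weight p (b :: t) = (if b then p else 1 - p).
  have H := sum_cons b k (fun _ => 1).
  under eq_bigr do rewrite -[weight _ _]mulr1.
  by rewrite H; under eq_bigr do rewrite mulr1; rewrite IH mulr1.
by rewrite !E addrC subrK.
Qed.

Lemma M_hit c k x : (x <= L) || (U <= x) -> M c k x = 0.
Proof.
move=> H; apply: big1 => t _.
by case: k t => [|k] t /=; rewrite H mulr0.
Qed.

Lemma M_0 c x : M c 0 x = 0.
Proof. by apply: big1 => t _ /=; case: (_ || _); rewrite mulr0. Qed.

Lemma M_S c k x : ~~ ((x <= L) || (U <= x)) ->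
  M c k.+1 x = 1 + p * M true k (x + stp c true) + (1 - p) * M false k (x + stp c false).
Proof.
move=> H; rewrite {1}/M (@tuple_split _ (fun s => weight p s * (T L U c x k.+1 s)%:R)) big_bool /=.
have E b : \sum_(t : k.-tuple bool) weight p (b :: t) * (T L U c x k.+1 (b :: t))%:R
   = (if b then p else 1 - p) * (1 + M b k (x + stp c b)).
  under eq_bigr do rewrite /= (negbTE H) -nat1r.
  rewrite (sum_cons b k (fun s => 1 + (T L U b (x + stp c b) k s)%:R)).
  congr (_ * _); under eq_bigr do rewrite mulrDr mulr1.
  by rewrite big_split sum_weight.
by rewrite !E !mulrDr !mulr1 addrACA [p + _]addrC subrK addrA.
Qed.
End M.

Section Main.
Variables (R : realFieldType) (p : R) (L U : int).
Local Notation m := (@M R p L U false).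
Local Notation n := (@M R p L U true).

Lemma MfS k x : ~~ ((x <= L) || (U <= x)) ->
  m k.+1 x = 1 + p * n k (x + 1) + (1 - p) * m k (x - 1).
Proof. exact: M_S. Qed.

Lemma MtS k x : ~~ ((x <= L) || (U <= x)) ->
  n k.+1 x = 1 + p * n k (x + 2) + (1 - p) * m k (x - 1).
Proof. exact: M_S. Qed.

Lemma Mh c k x : (x <= L) || (U <= x) -> @M R p L U c k x = 0.
Proof. exact: M_hit. Qed.

Lemma part1 (hLU : 4 <= U - L) k x : (2 <= k)%N -> L <= x <= U ->
  mfun p L U k x = sys_rhs p L U (mfun p L U) k x.
Proof.
case: k => [|[|j]] // _ hx.
rewrite /sys_rhs /= !mfunE.
case: ifP => [/eqP ->|/eqP hU]; first by rewrite Mh //; lia.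
case: ifP => [/eqP ->|/eqP hU1].
  rewrite MfS; last lia.
  rewrite (Mh true); last lia.
  by rewrite mulr0 addr0.
case: ifP => [/eqP ->|/eqP hU2].
  rewrite MfS; last lia.
  rewrite MtS; last lia.
  rewrite (Mh true j); last lia.
  have -> : U - 2 + 1 - 1 = U - 2 by ring.
  ring.
case: ifP => [/eqP ->|/eqP hL]; first by rewrite Mh //; lia.
rewrite (MfS _ x); last lia.
rewrite (MtS _ (x + 1)); last lia.
rewrite (MfS _ (x + 2)); last lia.
have -> : x + 1 + 2 = x + 2 + 1 by ring.
have -> : x + 1 - 1 = x by ring.
have -> : x + 2 - 1 = x + 1 by ring.
ring.
Qed.

Lemma part2 (hLU : 4 <= U - L) (f : nat -> int -> R) :
     (forall x : int, L <= x <= U ->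
        f 0%N x = mfun p L U 0 x /\ f 1%N x = mfun p L U 1 x) ->
     (forall (k : nat) (x : int), (2 <= k)%N -> L <= x <= U ->
        f k x = sys_rhs p L U f k x) ->
     forall (k : nat) (x : int), L <= x <= U -> f k x = mfun p L U k x.
Proof.
move=> h01 hrec.
have key k : (forall x, L <= x <= U -> f k x = mfun p L U k x) /\
             (forall x, L <= x <= U -> f k.+1 x = mfun p L U k.+1 x).
  elim: k => [|k [IH1 IH2]].
    by split=> x hx; case: (h01 x hx).
  split=> // x hx.
  rewrite hrec // part1 // /sys_rhs /=.
  case: ifP => // /eqP hU.
  case: ifP => [/eqP hU1|/eqP hU1]; first by rewrite IH2 //; lia.
  case: ifP => [/eqP hU2|/eqP hU2]; first by rewrite IH1 ?IH2 //; lia.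
  case: ifP => // /eqP hL.
  rewrite (IH1 x) ?(IH1 (x + 1)) ?(IH2 (x + 2)) ?(IH2 (x - 1)) //; lia.
by move=> k x hx; case: (key k) => H _; apply: H.
Qed.

End Main.

Theorem theorem3p1 (R : realFieldType) (p : R) (L U : int)
    (hp0 : 0 < p) (hp1 : p < 1) (hLU : 4 <= U - L) :
  (forall (k : nat) (x : int), (2 <= k)%N -> L <= x <= U ->
     mfun p L U k x = sys_rhs p L U (mfun p L U) k x)
  /\
  (forall f : nat -> int -> R,
     (forall x : int, L <= x <= U ->
        f 0%N x = mfun p L U 0 x /\ f 1%N x = mfun p L U 1 x) ->
     (forall (k : nat) (x : int), (2 <= k)%N -> L <= x <= U ->
        f k x = sys_rhs p L U f k x) ->
     forall (k : nat) (x : int), L <= x <= U -> f k x = mfun p L U k x).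
Proof.
split; first exact: part1.
exact: part2.
Qed.
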